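(* For every finite bounded commutative BCK-algebra $\mathcal A$ and each of the equations $x=1$ and $\neg x=1$ (in one variable $x$), either the degree of satisfiability of the equation in $\mathcal A$ equals $1$ or it is at most $\frac12$. Thus both equations have finite satisfiability gap $\frac12$ among bounded commutative BCK-algebras, and this value is realized by the two-element algebra $\mathcal C_2$ (with $1=1$).
   Context: A BCK-algebra is a set $A$ with a binary operation $\cdot$ and a constant $0$ such that for all $x,y,z\in A$: (BCK1) $((x\cdot y)\cdot(x\cdot z))\cdot(z\cdot y)=0$; (BCK2) $(x\cdot(x\cdot y))\cdot y=0$; (BCK3) $x\cdot x=0$; (BCK4) $0\cdot x=0$; (BCK5) $x\cdot y=0$ and $y\cdot x=0$ imply $x=y$. Define $x\wedge y:=y\cdot(y\cdot x)$; the algebra is commutative if $x\wedge y=y\wedge x$ for all $x,y$. A bounded BCK-algebra is a BCK-algebra with a distinguished element $1$ with $x\cdot 1=0$ for all $x$; $\neg x:=1\cdot x$. The degree of satisfiability of a one-variable equation $\varphi(x)$ in a finite algebra $M$ is $|\{a\in M:\varphi(a)\}|/|M|$. $\mathcal C_2$ is the BCK-algebra on $\{0,1\}$ with $x\cdot y=\max\{x-y,0\}$. *)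

(* Defs.v *)
From mathcomp Require Import all_boot all_order all_algebra.
Set Implicit Arguments. Unset Strict Implicit. Unset Printing Implicit Defensive.
Import GRing.Theory Num.Theory.
Local Open Scope ring_scope.

(* A BCK-algebra (A, op, 0) on a carrier T; op x y stands for x . y *)
Definition is_BCK (T : Type) (op : T -> T -> T) (z : T) : Prop :=
  [/\ (forall x y w, op (op (op x y) (op x w)) (op w y) = z),
      (forall x y, op (op x (op x y)) y = z),
      (forall x, op x x = z),
      (forall x, op z x = z)
    & (forall x y, op x y = z -> op y x = z -> x = y)].

Definition bck_meet (T : Type) (op : T -> T -> T) (x y : T) : T := op y (op y x).

Definition is_commutative_BCK (T : Type) (op : T -> T -> T) (z : T) : Prop :=
  is_BCK op z /\ forall x y, bck_meet op x y = bck_meet op y x.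

Definition is_bounded_commutative_BCK (T : Type) (op : T -> T -> T) (z o : T)
  : Prop := is_commutative_BCK op z /\ forall x, op x o = z.

Definition bck_neg (T : Type) (op : T -> T -> T) (o x : T) : T := op o x.

Definition dsat (T : finType) (phi : pred T) : rat :=
  (#|[set a | phi a]|%:R / #|T|%:R)%R.

(* The two-element algebra C_2 on {0,1} = bool (false = 0, true = 1),
   x . y = max(x - y, 0) *)
Definition C2op (x y : bool) : bool := x && ~~ y.

(* Main.v *)
Require Import Defs.
From mathcomp Require Import all_boot all_order all_algebra.
Import GRing.Theory Num.Theory.
Local Open Scope ring_scope.

Lemma dsat_le1 (T : finType) (phi : pred T) :
  (forall a b, phi a -> phi b -> a = b) ->
  dsat phi = 1 \/ dsat phi <= 1 / 2.
Proof.
move=> H.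
have hS : (#|[set a | phi a]| <= 1)%N.
  apply/card_le1_eqP => a b; rewrite !inE => ha hb; exact: H.
have hST : (#|[set a | phi a]| <= #|T|)%N by apply: max_card.
rewrite /dsat.
move: hS hST; set s := #|[set a | phi a]|; move=> hS hST.
case: s hS hST => [|[|//]] _ hST.
  by right; rewrite mul0r.
case: (ltnP 1 #|T|) => hT.
  right.
  have n0 : (0 : rat) < #|T|%:R by rewrite ltr0n; apply: ltn_trans hT.
  rewrite ler_pdivrMr // mul1r ler_pdivlMl ?ltr0n // mulr1.
  by rewrite (ler_nat rat 2 #|T|).
left. have -> : #|T| = 1%N by apply/eqP; rewrite eqn_leq hT.
by rewrite divr1.
Qed.

Theorem proposition4p3 :
  (forall (T : finType) (op : T -> T -> T) (z o : T),
     is_bounded_commutative_BCK op z o ->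
     (dsat (fun a : T => a == o) = 1 \/ dsat (fun a : T => a == o) <= 1 / 2) /\
     (dsat (fun a : T => bck_neg op o a == o) = 1 \/
      dsat (fun a : T => bck_neg op o a == o) <= 1 / 2)) /\
  (is_bounded_commutative_BCK C2op false true /\
   dsat (fun a : bool => a == true) = 1 / 2 /\
   dsat (fun a : bool => bck_neg C2op true a == true) = 1 / 2).
Proof.
split.
  move=> T op z o [[[B1 B2 B3 B4 B5] Hc] Hb]; split.
    by apply: dsat_le1 => a b /eqP -> /eqP ->.
  apply: dsat_le1.
  have key : forall a, bck_neg op o a == o -> a = z.
    move=> a /eqP ha.
    have h1 := Hc a o.
    rewrite /bck_neg in ha. move: h1; rewrite /bck_meet ha B3 Hb => h1.
    by apply: B5; [rewrite -h1 | apply: B4].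
  by move=> a b /key -> /key ->.
split.
  split; first split.
  - split; intros; repeat match goal with x : bool |- _ => destruct x end;
      simpl in *; congruence.
  - intros; repeat match goal with x : bool |- _ => destruct x end; reflexivity.
  - by case.
split.
  rewrite /dsat.
  have -> : [set a : bool | a == true] = [set true].
    by apply/setP => x; rewrite !inE.
  by rewrite cards1 card_bool.
rewrite /dsat.
have -> : [set a : bool | bck_neg C2op true a == true] = [set false].
  by apply/setP => x; rewrite !inE; case: x.
by rewrite cards1 card_bool.
Qed.
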